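(* Each of $r_0$ and $r_1$ has a unique fixed point in $[0,1]$, denoted $\eta_0$ and $\eta_1$ respectively, and each is a global attractor of the corresponding dynamical system on $[0,1]$: $r_i^k(z)\to\eta_i$ as $k\to\infty$ for every $z\in[0,1]$, $i\in\{0,1\}$.
   Context: Parameters $a,b,p,q\in(0,1)$ with $a+b\ne1$. $\alpha_0(z)=(1-p)(a+b-1)z+1-b+pb$, $\alpha_1(z)=(1-q)(1-a-b)z+b+q-bq$, $r_0(z)=\frac{(a+b-1)z+1-b}{\alpha_0(z)}$, $r_1(z)=\frac{q(a+b-1)z+q-qb}{\alpha_1(z)}$; these map $[0,1]$ into $[0,1]$. *)

(* Defs.v *)
From Stdlib Require Import Reals.
Open Scope R_scope.

Definition alpha0 (a b p : R) (z : R) : R := (1 - p) * (a + b - 1) * z + 1 - b + p * b.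
Definition alpha1 (a b q : R) (z : R) : R := (1 - q) * (1 - a - b) * z + b + q - b * q.

Definition r0 (a b p : R) (z : R) : R := ((a + b - 1) * z + 1 - b) / alpha0 a b p z.
Definition r1 (a b q : R) (z : R) : R := (q * (a + b - 1) * z + q - q * b) / alpha1 a b q z.

Fixpoint iterR (k : nat) (f : R -> R) (z : R) : R :=
  match k with
  | O => z
  | S k' => f (iterR k' f z)
  end.

Definition unique_attracting_fixpoint (f : R -> R) : Prop :=
  exists eta : R,
    (0 <= eta <= 1 /\ f eta = eta) /\
    (forall y : R, 0 <= y <= 1 -> f y = y -> y = eta) /\
    (forall z : R, 0 <= z <= 1 -> Un_cv (fun k => iterR k f z) eta).

(* Main.v *)
Require Import Defs.
From Stdlib Require Import Reals.
From Stdlib Require Import Lra Lia Ranalysis5.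
Open Scope R_scope.

Lemma iter_in (f : R -> R) (Hr : forall z, 0<=z<=1 -> 0 < f z < 1) :
  forall n z, 0<=z<=1 -> 0 <= iterR n f z <= 1.
Proof. induction n; intros z Hz; simpl; auto. specialize (Hr _ (IHn z Hz)); lra. Qed.

Lemma iter_shift (f : R -> R) : forall n z, iterR (S n) f z = iterR n f (f z).
Proof. induction n; intros z; simpl; auto. simpl in IHn. rewrite <- IHn. reflexivity. Qed.

Lemma gen (f : R -> R) (A B C D : R)
  (Hf : forall z, f z = (A*z+B)/(C*z+D))
  (HD : 0 < D) (HCD : 0 < C + D)
  (Hr : forall z, 0<=z<=1 -> 0 < f z < 1) :
  unique_attracting_fixpoint f.
Proof.
  set (den := fun z => C*z+D).
  assert (Hden : forall z, 0<=z<=1 -> 0 < den z) by (intros z Hz; unfold den; destruct (Req_dec z 1); [subst; lra|]; assert (0 < (1-z)*D) by (apply Rmult_lt_0_compat; lra); assert (0 <= z*(C+D)) by (apply Rmult_le_pos; lra); nra).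
  set (k := A*D - B*C).
  assert (Hdiff : forall z w, 0<=z<=1 -> 0<=w<=1 ->
     f z - f w = k*(z-w)/(den z * den w)).
  { intros z w Hz Hw. pose proof (Hden z Hz); pose proof (Hden w Hw).
    rewrite !Hf. unfold k, den in *. field. split; lra. }
  set (N := fun z => den z * den (f z)).
  assert (HNl : forall z, 0<=z<=1 -> N z = C*(A+D)*z + C*B + D*D).
  { intros z Hz. pose proof (Hden z Hz). unfold N, den in *. rewrite Hf. field. lra. }
  assert (HNp : forall z, 0<=z<=1 -> 0 < N z).
  { intros z Hz. unfold N. pose proof (Hr z Hz). apply Rmult_lt_0_compat; apply Hden; lra. }
  assert (Hh : forall z w, 0<=z<=1 -> 0<=w<=1 ->
     f (f z) - f (f w) = (k*k)*(z-w)/(N z * N w)).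
  { intros z w Hz Hw. pose proof (Hr z Hz); pose proof (Hr w Hw).
    rewrite Hdiff by lra. rewrite Hdiff by lra.
    pose proof (Hden z Hz); pose proof (Hden w Hw).
    pose proof (Hden (f z) ltac:(lra)); pose proof (Hden (f w) ltac:(lra)).
    unfold N. field. repeat split; lra. }
  assert (Hcont : forall a, 0 <= a <= 1 -> continuity_pt (fun z => z - f z) a).
  { intros a Ha.
    apply continuity_pt_locally_ext with (f := fun z => z - (A*z+B)/(C*z+D)) (a := 1).
    - lra.
    - intros y _. rewrite Hf. reflexivity.
    - apply continuity_pt_minus. apply derivable_continuous_pt; apply derivable_pt_id.
      apply continuity_pt_div.
      + apply continuity_pt_plus. apply continuity_pt_scal. apply derivable_continuous_pt; apply derivable_pt_id. apply continuity_pt_const. intros u v; reflexivity.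
      + apply continuity_pt_plus. apply continuity_pt_scal. apply derivable_continuous_pt; apply derivable_pt_id. apply continuity_pt_const. intros u v; reflexivity.
      + pose proof (Hden a Ha). unfold den in *. lra. }
  destruct (IVT_interv (fun z => z - f z) 0 1 Hcont ltac:(lra)) as [eta [He Hfe]].
  { pose proof (Hr 0 ltac:(lra)). lra. }
  { pose proof (Hr 1 ltac:(lra)). lra. }
  simpl in Hfe. assert (Hfix : f eta = eta) by lra.
  pose proof (Hr eta He) as Hre. rewrite Hfix in Hre.
  set (G := fun z => (k*k)/(N z * N eta)).
  assert (Hhe : forall z, 0<=z<=1 -> f (f z) - eta = G z * (z - eta)).
  { intros z Hz. rewrite <- Hfix at 1. rewrite <- Hfix at 1. rewrite Hh by lra.
    unfold G. field. split; apply Rgt_not_eq; apply HNp; lra. }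
  assert (HG0 : 0 <= G 0 < 1).
  { pose proof (Hhe 0 ltac:(lra)). pose proof (Hr 0 ltac:(lra)).
    pose proof (Hr (f 0) ltac:(lra)). split.
    - unfold G. apply Rmult_le_pos. nra. apply Rlt_le, Rinv_0_lt_compat, Rmult_lt_0_compat; apply HNp; lra.
    - nra. }
  assert (HG1 : 0 <= G 1 < 1).
  { pose proof (Hhe 1 ltac:(lra)). pose proof (Hr 1 ltac:(lra)).
    pose proof (Hr (f 1) ltac:(lra)). split.
    - unfold G. apply Rmult_le_pos. nra. apply Rlt_le, Rinv_0_lt_compat, Rmult_lt_0_compat; apply HNp; lra.
    - nra. }
  set (L := Rmax (G 0) (G 1)).
  assert (HL : 0 <= L < 1) by (unfold L; apply Rmax_case; lra).
  assert (HGz : forall z, 0<=z<=1 -> 0 <= G z <= L).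
  { intros z Hz. pose proof (HNp z Hz). pose proof (HNp eta He).
    pose proof (HNp 0 ltac:(lra)). pose proof (HNp 1 ltac:(lra)).
    assert (Hkk : 0 <= k*k) by nra.
    assert (HG0z : 0 <= G z) by (unfold G; apply Rmult_le_pos; [lra| apply Rlt_le, Rinv_0_lt_compat; nra]).
    split; auto.
    pose proof (HNl z Hz) as E. pose proof (HNl 0 ltac:(lra)) as E0. pose proof (HNl 1 ltac:(lra)) as E1.
    destruct (Rle_dec 0 (C*(A+D))) as [Hs|Hs].
    - apply Rle_trans with (G 0); [|apply Rmax_l].
      unfold G. apply Rmult_le_compat_l; auto. apply Rinv_le_contravar. nra.
      apply Rmult_le_compat_r. lra. nra.
    - apply Rle_trans with (G 1); [|apply Rmax_r].
      unfold G. apply Rmult_le_compat_l; auto. apply Rinv_le_contravar. nra.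
      apply Rmult_le_compat_r. lra. nra. }
  assert (Hcontr : forall z, 0<=z<=1 -> Rabs (f (f z) - eta) <= L * Rabs (z - eta)).
  { intros z Hz. rewrite Hhe by auto. rewrite Rabs_mult. pose proof (HGz z Hz).
    rewrite Rabs_right by lra. apply Rmult_le_compat_r. apply Rabs_pos. lra. }
  exists eta. split; [split; [lra|auto]|split].
  - intros y Hy Hfy. destruct (Req_dec y eta) as [|Hne]; auto.
    pose proof (Hhe y Hy) as E. rewrite Hfy, Hfy in E. pose proof (HGz y Hy).
    assert (G y = 1). { apply Rmult_eq_reg_r with (y - eta). lra. lra. }
    lra.
  - intros z Hz.
    assert (Hb : forall n z, 0<=z<=1 ->
       Rabs (iterR (2*n) f z - eta) <= L^n /\ Rabs (iterR (S (2*n)) f z - eta) <= L^n).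
    { induction n; intros w Hw.
      - simpl. pose proof (Hr w Hw). split; apply Rabs_le; lra.
      - assert (E : iterR (2 * S n) f w = f (f (iterR (2*n) f w))).
        { replace (2 * S n)%nat with (S (S (2*n))) by lia. reflexivity. }
        pose proof (iter_in f Hr (2*n) w Hw) as Hi.
        destruct (IHn w Hw) as [IH1 _].
        assert (Hev : Rabs (iterR (2 * S n) f w - eta) <= L ^ S n).
        { rewrite E. eapply Rle_trans. apply Hcontr; auto. change (L ^ S n) with (L * L ^ n). apply Rmult_le_compat_l; lra. }
        split; auto.
        rewrite iter_shift. pose proof (Hr w Hw).
        assert (E' : iterR (2 * S n) f (f w) = f (f (iterR (2*n) f (f w)))).
        { replace (2 * S n)%nat with (S (S (2*n))) by lia. reflexivity. }
        rewrite E'. pose proof (iter_in f Hr (2*n) (f w) ltac:(lra)).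
        destruct (IHn (f w) ltac:(lra)) as [IH2 _].
        eapply Rle_trans. apply Hcontr; auto. change (L ^ S n) with (L * L ^ n). apply Rmult_le_compat_l; lra. }
    intros eps Heps.
    assert (HaL : Rabs L < 1) by (rewrite Rabs_right; lra).
    destruct (pow_lt_1_zero L HaL eps Heps) as [M HM].
    exists (2*M)%nat. intros n Hn. unfold Rdist.
    destruct (Nat.Even_or_Odd n) as [[m Hm]|[m Hm]]; subst n.
    + eapply Rle_lt_trans. apply (Hb m z Hz).
      eapply Rle_lt_trans. apply Rle_abs. apply HM. lia.
    + replace (2*m+1)%nat with (S (2*m)) by lia.
      eapply Rle_lt_trans. apply (Hb m z Hz).
      eapply Rle_lt_trans. apply Rle_abs. apply HM. lia.
Qed.

Lemma lin_pos (u v z : R) : 0 < v -> 0 < u + v -> 0 <= z <= 1 -> 0 < u*z + v.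
Proof.
  intros Hv Huv Hz. destruct (Req_dec z 1); [subst; lra|].
  assert (0 < (1-z)*v) by (apply Rmult_lt_0_compat; lra).
  assert (0 <= z*(u+v)) by (apply Rmult_le_pos; lra). nra.
Qed.

Lemma frac01 (n d : R) : 0 < n -> n < d -> 0 < n / d < 1.
Proof.
  intros Hn Hd. split. apply Rdiv_lt_0_compat; lra.
  apply (Rmult_lt_reg_r d); [lra|]. unfold Rdiv. rewrite Rmult_assoc, Rinv_l; lra.
Qed.

Theorem lemma2p31 (a b p q : R)
  (ha : 0 < a < 1) (hb : 0 < b < 1) (hp : 0 < p < 1) (hq : 0 < q < 1)
  (hab : a + b <> 1) :
  unique_attracting_fixpoint (r0 a b p) /\ unique_attracting_fixpoint (r1 a b q).
Proof.
  split.
  - apply (gen _ (a+b-1) (1-b) ((1-p)*(a+b-1)) (1-b+p*b)).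
    + intros z. unfold r0, alpha0. f_equal; ring.
    + nra.
    + nra.
    + intros z Hz. unfold r0, alpha0.
      replace ((a + b - 1) * z + 1 - b) with ((a+b-1)*z + (1-b)) by ring.
      replace ((1 - p) * (a + b - 1) * z + 1 - b + p * b) with
        ((a+b-1)*z + (1-b) + ((-p*(a+b-1))*z + p*b)) by ring.
      apply frac01. apply lin_pos; nra.
      pose proof (lin_pos (-p*(a+b-1)) (p*b) z ltac:(nra) ltac:(nra) Hz). lra.
  - apply (gen _ (q*(a+b-1)) (q-q*b) ((1-q)*(1-a-b)) (b+q-b*q)).
    + intros z. unfold r1, alpha1. f_equal; ring.
    + nra.
    + nra.
    + intros z Hz. unfold r1, alpha1.
      replace (q * (a + b - 1) * z + q - q * b) with (q*(a+b-1)*z + (q-q*b)) by ring.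
      replace ((1 - q) * (1 - a - b) * z + b + q - b * q) with
        (q*(a+b-1)*z + (q-q*b) + ((1-a-b)*z + b)) by ring.
      apply frac01. apply lin_pos; nra.
      pose proof (lin_pos (1-a-b) b z ltac:(nra) ltac:(nra) Hz). lra.
Qed.
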